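(* Let $(V,\mathcal H,\iota,W)$ be a generalized functional theory. The dimension of the set $\iota^*(\mathcal E)$ of ensemble-state-representable densities equals $\dim V-\dim\iota^{-1}(\mathrm{span}\{\mathbb 1\})$. In particular $\iota^*(\mathcal E)$ has full dimension in $V^*$ if and only if $\iota$ is injective and $\mathbb 1$ is not in the image of $\iota$; precisely, $\mathrm{aff}(\iota^*(\mathcal E))=V^*$ if and only if $\iota^{-1}(\mathrm{span}\{\mathbb 1\})=0$.
   Context: A generalized functional theory is a tuple $(V,\mathcal H,\iota,W)$ with $V$ a finite-dimensional real vector space, $\mathcal H$ a finite-dimensional complex Hilbert space, $\iota:V\to i\mathfrak u(\mathcal H)$ a linear map into the Hermitian operators, and $W$ Hermitian. Density operators are regarded as elements of $(i\mathfrak u(\mathcal H))^*$ via the trace pairing; $\iota^*$ is the dual map. $\mathcal E$ is the set of density operators, $\mathbb 1$ the identity on $\mathcal H$, and $\mathrm{aff}$ the affine hull. *)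

(* Defs.v *)
From HB Require Import structures.
From mathcomp Require Import all_boot all_order all_algebra complex.
From mathcomp Require Import reals.
Set Implicit Arguments. Unset Strict Implicit. Unset Printing Implicit Defensive.
Import Order.TTheory GRing.Theory Num.Theory.
Local Open Scope ring_scope.

Definition density_op (C : numClosedFieldType) (n : nat) (rho : 'M[C]_n) : Prop :=
  [/\ rho \is hermsymmx,
      (forall x : 'cV[C]_n, 0 <= ((map_mx Num.conj x)^T *m rho *m x) 0 0)
    & \tr rho = 1].

Definition gft_map (R : realType) (V : vectType R) (n : nat)
    (iota : V -> 'M[R[i]]_n) : Prop :=
  [/\ forall u v, iota (u + v) = iota u + iota v,
      forall (a : R) v, iota (a *: v) = (real_complex R a) *: iota v
    & forall v, iota v \is hermsymmx].

(* The dual map: iota^* rho = (v |-> tr (rho iota(v))) in V^* = 'Hom(V, R).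
   (The trace is real since rho and iota v are Hermitian.) *)
Definition iota_star (R : realType) (V : vectType R) (n : nat)
    (iota : V -> 'M[R[i]]_n) (rho : 'M[R[i]]_n) : 'Hom(V, R^o) :=
  linfun (fun v : V => (complex.Re (\tr (rho *m iota v)) : R^o)).

Definition rep_densities (R : realType) (V : vectType R) (n : nat)
    (iota : V -> 'M[R[i]]_n) : 'Hom(V, R^o) -> Prop :=
  fun f => exists rho : 'M[R[i]]_n, density_op rho /\ f = iota_star iota rho.

Definition in_aff_hull (K : fieldType) (vT : vectType K) (S : vT -> Prop)
    (x : vT) : Prop :=
  exists (ps : seq vT) (c : seq K),
    [/\ size c = size ps, (forall p, p \in ps -> S p),
        \sum_(i < size c) c`_i = 1
      & x = \sum_(i < size ps) c`_i *: ps`_i].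

Definition aff_dim (K : fieldType) (vT : vectType K) (S : vT -> Prop)
    (d : nat) : Prop :=
  exists U : {vspace vT},
    (forall x, x \in U <->
       exists a b, [/\ in_aff_hull S a, in_aff_hull S b & x = a - b])
    /\ \dim U = d.

(* Main.v *)
Require Import Defs.
From HB Require Import structures.
From mathcomp Require Import all_boot all_order all_algebra complex.
From mathcomp Require Import reals ring lra.
Set Implicit Arguments. Unset Strict Implicit. Unset Printing Implicit Defensive.
Import Order.TTheory GRing.Theory Num.Theory.
Local Open Scope ring_scope.
Local Open Scope complex_scope.

Section LinfunGen.
Variables (K : fieldType) (aT rT : vectType K) (f : aT -> rT).
Hypothesis hf : linear f.
Definition fL := f.
HB.instance Definition _ := GRing.isLinear.Build K aT rT *:%R fL hf.
Lemma linfunE' : linfun f =1 f.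
Proof. exact: (lfunE fL). Qed.
End LinfunGen.

Section Annih.
Variables (R : realType) (V : vectType R) (K : {vspace V}).

Definition Phi_fun (f : 'Hom(V, R^o)) : 'Hom(subvs_of K, R^o) :=
  (f \o linfun (@vsval _ _ K))%VF.
Lemma Phi_lin : linear Phi_fun.
Proof. by move=> a f g; rewrite /Phi_fun comp_lfunDl comp_lfunZl. Qed.
Definition Phi := linfun Phi_fun.
Definition Ann := lker Phi.

Lemma memAnn f : f \in Ann <-> (forall v, v \in K -> f v = 0).
Proof.
rewrite memv_ker (linfunE' Phi_lin); split.
  move/eqP => H v vK.
  have := congr1 (fun g : 'Hom(_, _) => g (vsproj K v)) H.
  by rewrite /Phi_fun comp_lfunE lfunE /= vsprojK // zero_lfunE.
move=> H; apply/eqP/lfunP => u.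
by rewrite /Phi_fun comp_lfunE lfunE /= zero_lfunE H // subvsP.
Qed.

Lemma dimAnn : \dim Ann = (\dim {:V} - \dim K)%N.
Proof.
have := limg_ker_dim Phi fullv.
rewrite capfv.
have -> : limg Phi = fullv.
  apply/vspaceP => g; rewrite memvf; apply/memv_imgP.
  exists (g \o linfun (vsproj K))%VF; first by rewrite memvf.
  rewrite (linfunE' Phi_lin); apply/lfunP => u.
  by rewrite /Phi_fun !comp_lfunE !lfunE /= vsvalK.
have -> : \dim {:'Hom(subvs_of K, R^o)} = \dim K.
  rewrite !dimvf. change (\dim K * 1 = \dim K)%N. by rewrite muln1.
have -> : \dim {:'Hom(V, R^o)} = \dim {:V}.
  rewrite !dimvf. change (dim V * 1 = dim V)%N. by rewrite muln1.
move=> <-; by rewrite addnK.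
Qed.
End Annih.
Section Cplx.
Variable R : realType.
Local Notation C := R[i].
Lemma ReD (x y : C) : complex.Re (x + y) = complex.Re x + complex.Re y.
Proof. by case: x; case: y. Qed.
Lemma ImD (x y : C) : complex.Im (x + y) = complex.Im x + complex.Im y.
Proof. by case: x; case: y. Qed.
Lemma Re_sum I (r : seq I) (P : pred I) (F : I -> C) :
  complex.Re (\sum_(i <- r | P i) F i) = \sum_(i <- r | P i) complex.Re (F i).
Proof. exact: (big_morph _ ReD). Qed.
Lemma Im_sum I (r : seq I) (P : pred I) (F : I -> C) :
  complex.Im (\sum_(i <- r | P i) F i) = \sum_(i <- r | P i) complex.Im (F i).
Proof. exact: (big_morph _ ImD). Qed.
Lemma ReM (a : R) (z : C) : complex.Re (a%:C * z) = a * complex.Re z.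
Proof. case: z => x y /=. ring. Qed.
Lemma ReR (a : R) : complex.Re (a%:C) = a. Proof. by []. Qed.
Lemma conjR (a : R) : Num.conj (a%:C) = a%:C.
Proof. by apply/eqP; rewrite eq_complex /= oppr0 !eqxx. Qed.
Lemma Re_conjM (z : C) : complex.Re (z * Num.conj z) = complex.Re z ^+ 2 + complex.Im z ^+ 2.
Proof. case: z => x y /=. ring. Qed.
Lemma real_of_conj (z : C) : z = Num.conj z -> z = (complex.Re z)%:C.
Proof. case: z => x y /= [] h. congr (_ +i* _). lra. Qed.

Lemma hermP n (A : 'M[C]_n) : A \is hermsymmx <-> forall i j, A i j = Num.conj (A j i).
Proof.
rewrite sesquilinear.is_hermitianmxE expr0 scale1r; split.
  by move/eqP => H i j; rewrite {1}H !mxE.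
by move=> H; apply/eqP/matrixP => i j; rewrite !mxE H.
Qed.

Lemma herm_tr_real n (A : 'M[C]_n) : A \is hermsymmx -> \tr A = (complex.Re (\tr A))%:C.
Proof.
move/hermP => H; apply: real_of_conj.
rewrite /mxtrace rmorph_sum; apply: eq_bigr => i _; exact: H.
Qed.

Lemma herm_sq0 n (A : 'M[C]_n) : A \is hermsymmx -> complex.Re (\tr (A *m A)) = 0 -> A = 0.
Proof.
move/hermP => H.
have E : complex.Re (\tr (A *m A)) = \sum_i \sum_j (complex.Re (A i j) ^+ 2 + complex.Im (A i j) ^+ 2).
  rewrite /mxtrace Re_sum; apply: eq_bigr => i _; rewrite mxE Re_sum.
  by apply: eq_bigr => j _; rewrite (H j i) Re_conjM.
rewrite E => /eqP; rewrite psumr_eq0; last by move=> i _; apply: sumr_ge0 => j _; rewrite addr_ge0 // sqr_ge0.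
move/allP => H1; apply/matrixP => i j; rewrite mxE.
have := H1 i (mem_index_enum i); rewrite implyTb psumr_eq0; last by move=> k _; rewrite addr_ge0 // sqr_ge0.
move/allP => /(_ j (mem_index_enum j)); rewrite implyTb => /eqP.
case: (A i j) => x y /= h.
have hx : x = 0 by nra.
have hy : y = 0 by nra.
by rewrite hx hy.
Qed.
End Cplx.
Section Span.
Variables (R : realType) (n : nat).
Local Notation C := R[i].
Definition adjv (x : 'cV[C]_n) : 'rV[C]_n := (map_mx Num.conj x)^T.
Definition Sp (B : 'M[C]_n) := exists s : seq (R * 'M[C]_n),
  (forall p, p \in s -> density_op p.2) /\ B = \sum_(p <- s) (p.1)%:C *: p.2.

Lemma Sp0 : Sp 0.
Proof. by exists [::]; split => //; rewrite big_nil. Qed.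
Lemma SpD A B : Sp A -> Sp B -> Sp (A + B).
Proof.
move=> [s [hs ->]] [t [ht ->]]; exists (s ++ t); split; last by rewrite big_cat.
by move=> p; rewrite mem_cat => /orP [/hs|/ht].
Qed.
Lemma SpZ (c : R) A : Sp A -> Sp (c%:C *: A).
Proof.
move=> [s [hs ->]]; exists [seq (c * p.1, p.2) | p <- s]; split.
  by move=> p /mapP [q qs ->] /=; apply: hs.
rewrite big_map scaler_sumr; apply: eq_bigr => p _ /=.
by rewrite scalerA rmorphM.
Qed.
Lemma SpN A : Sp A -> Sp (- A).
Proof. by move=> h; rewrite -scaleN1r -(rmorphN1 (real_complex R)); apply: SpZ. Qed.
Lemma SpB A B : Sp A -> Sp B -> Sp (A - B).
Proof. by move=> hA hB; apply: SpD => //; apply: SpN. Qed.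
Lemma Sp_sum I (r : seq I) (P : pred I) (F : I -> 'M[C]_n) :
  (forall i, P i -> Sp (F i)) -> Sp (\sum_(i <- r | P i) F i).
Proof. by move=> h; apply: (big_ind Sp Sp0 SpD). Qed.

Lemma conj_mulC (z : C) : Num.conj z * z = (complex.Re z ^+ 2 + complex.Im z ^+ 2)%:C.
Proof. case: z => a b; apply/eqP; rewrite eq_complex /=; apply/andP; split; apply/eqP; ring. Qed.

Lemma adjv_entry (x : 'cV[C]_n) k : adjv x 0 k = Num.conj (x k 0).
Proof. by rewrite !mxE. Qed.

Lemma density_outer (x : 'cV[C]_n) (c : R) :
  0 <= c -> (c%:C * (adjv x *m x) 0 0 = 1) -> density_op (c%:C *: (x *m adjv x)).
Proof.
move=> c0 hc; split.
- apply/hermP => i j; rewrite !mxE !big_ord1 !adjv_entry.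
  by rewrite rmorphM /= conjR !rmorphM /= conjCK [_ * x i 0]mulrC.
- move=> y; rewrite -/(adjv y). rewrite -scalemxAr -scalemxAl !mulmxA -(mulmxA (adjv y *m x)) mxE mxE big_ord1.
  have -> : (adjv x *m y) 0 0 = Num.conj ((adjv y *m x) 0 0).
    rewrite !mxE rmorph_sum; apply: eq_bigr => k _.
    by rewrite !adjv_entry rmorphM /= conjCK mulrC.
  by apply: mulr_ge0; [rewrite ler0c | rewrite mul_conjC_ge0].
- by rewrite mxtraceZ mxtrace_mulC /mxtrace big_ord1.
Qed.

Lemma Sp_outer (x : 'cV[C]_n) : Sp (x *m adjv x).
Proof.
pose r := \sum_k (complex.Re (x k 0) ^+ 2 + complex.Im (x k 0) ^+ 2).
have hq : (adjv x *m x) 0 0 = r%:C.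
  rewrite mxE rmorph_sum; apply: eq_bigr => k _; by rewrite adjv_entry conj_mulC.
have r0 : 0 <= r by apply: sumr_ge0 => k _; rewrite addr_ge0 // sqr_ge0.
have [rz|rnz] := eqVneq r 0.
  have x0 : x = 0.
    move: rz => /eqP; rewrite psumr_eq0; last by move=> k _; rewrite addr_ge0 // sqr_ge0.
    move/allP => H; apply/matrixP => k l; rewrite (ord1 l) mxE.
    move: (H k (mem_index_enum k)); rewrite implyTb => /eqP.
    case: (x k 0) => a b /= h.
    have ha : a = 0 by nra.
    have hb : b = 0 by nra.
    by rewrite ha hb.
  by rewrite x0 mul0mx; apply: Sp0.
exists [:: (r, (r^-1)%:C *: (x *m adjv x))]; split.
  move=> p; rewrite inE => /eqP -> /=; apply: density_outer.
    by rewrite invr_ge0.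
  by rewrite hq -rmorphM mulVf.
by rewrite big_seq1 /= scalerA -rmorphM mulfV // scale1r.
Qed.

Definition ev (i : 'I_n) : 'cV[C]_n := delta_mx i 0.
Definition iu : C := Complex 0 1.
Lemma conj_iu : Num.conj iu = - iu.
Proof. by apply/eqP; rewrite eq_complex /= oppr0 !eqxx. Qed.
Lemma iu_sq : iu * - iu = 1.
Proof. apply/eqP; rewrite eq_complex /=; apply/andP; split; apply/eqP; ring. Qed.

Lemma adjvD x y : adjv (x + y) = adjv x + adjv y.
Proof. by apply/matrixP => a b; rewrite !mxE rmorphD. Qed.
Lemma adjvZ (c : C) x : adjv (c *: x) = Num.conj c *: adjv x.
Proof. by apply/matrixP => a b; rewrite !mxE rmorphM. Qed.
Lemma adjv_ev i : adjv (ev i) = delta_mx 0 i.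
Proof. by apply/matrixP => a b; rewrite !mxE rmorph_nat andbC. Qed.

Lemma P_ev i : ev i *m adjv (ev i) = delta_mx i i.
Proof. by rewrite adjv_ev mul_delta_mx. Qed.

Lemma P_pair i j (c : C) :
  (ev i + c *: ev j) *m adjv (ev i + c *: ev j) =
  delta_mx i i + Num.conj c *: delta_mx i j + c *: delta_mx j i
   + (c * Num.conj c) *: delta_mx j j.
Proof.
rewrite adjvD adjvZ !adjv_ev mulmxDl !mulmxDr -!scalemxAl -!scalemxAr !mul_delta_mx.
by rewrite scalerA !addrA.
Qed.

Lemma Sp_delta i : Sp (delta_mx i i).
Proof. by rewrite -P_ev; apply: Sp_outer. Qed.

Lemma Sp_G1 i j : Sp (delta_mx i j + delta_mx j i).
Proof.
have -> : delta_mx i j + delta_mx j i =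
   (ev i + 1 *: ev j) *m adjv (ev i + 1 *: ev j) - delta_mx i i - delta_mx j j.
  rewrite P_pair rmorph1 !scale1r mulr1.
  apply/matrixP => a b; rewrite !mxE; ring.
by apply: SpB; [apply: SpB; [apply: Sp_outer|apply: Sp_delta]|apply: Sp_delta].
Qed.

Lemma Sp_G2 i j : Sp (iu *: (delta_mx i j - delta_mx j i)).
Proof.
have -> : iu *: (delta_mx i j - delta_mx j i) =
   delta_mx i i + delta_mx j j - (ev i + iu *: ev j) *m adjv (ev i + iu *: ev j).
  rewrite P_pair conj_iu iu_sq.
  apply/matrixP => a b; rewrite !mxE; ring.
by apply: SpB; [apply: SpD; apply: Sp_delta|apply: Sp_outer].
Qed.

Lemma sum_delta (F : 'I_n -> 'I_n -> C) k l :
  \sum_i \sum_j F i j * ((k == i) && (l == j))%:R = F k l.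
Proof.
rewrite (bigD1 k) //= [X in _ + X = _]big1 ?addr0; last first.
  move=> i /negbTE; rewrite eq_sym => h; apply: big1 => j _.
  by rewrite h mulr0.
rewrite (bigD1 l) //= !eqxx mulr1 [X in _ + X = _]big1 ?addr0 // => j /negbTE.
by rewrite eq_sym => ->; rewrite mulr0.
Qed.

Lemma sum_delta' (F : 'I_n -> 'I_n -> C) k l :
  \sum_i \sum_j F i j * ((k == j) && (l == i))%:R = F l k.
Proof.
rewrite exchange_big /=; exact: (sum_delta (fun a b => F b a) k l).
Qed.

Lemma herm_decomp (B : 'M[C]_n) : B \is hermsymmx ->
  B = \sum_i \sum_j ((complex.Re (B i j) / 2)%:C *: (delta_mx i j + delta_mx j i)
        + (complex.Im (B i j) / 2)%:C *: (iu *: (delta_mx i j - delta_mx j i))).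
Proof.
move/hermP => H; apply/matrixP => k l.
rewrite summxE.
have E : forall i j, (((complex.Re (B i j) / 2)%:C *: (delta_mx i j + delta_mx j i)
        + (complex.Im (B i j) / 2)%:C *: (iu *: (delta_mx i j - delta_mx j i))) : 'M_n) k l
   = ((complex.Re (B i j) / 2)%:C + iu * (complex.Im (B i j) / 2)%:C) * ((k == i) && (l == j))%:R
   + ((complex.Re (B i j) / 2)%:C - iu * (complex.Im (B i j) / 2)%:C) * ((k == j) && (l == i))%:R.
  move=> i j; rewrite !mxE; ring.
under eq_bigr => i _ do (rewrite summxE; under eq_bigr => j _ do rewrite E).
under eq_bigr => i _ do rewrite big_split /=.
rewrite big_split /= sum_delta sum_delta'.
rewrite (H l k).
case: (B k l) => a b /=.
apply/eqP; rewrite eq_complex /=; apply/andP; split; apply/eqP; field; by [].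
Qed.

Lemma Sp_herm (B : 'M[C]_n) : B \is hermsymmx -> Sp B.
Proof.
move=> hB; rewrite (herm_decomp hB); apply: Sp_sum => i _; apply: Sp_sum => j _.
by apply: SpD; apply: SpZ; [apply: Sp_G1|apply: Sp_G2].
Qed.
End Span.

Section Main.
Variables (R : realType) (V : vectType R) (n : nat) (iota : V -> 'M[R[i]]_n).
Hypothesis hn : (0 < n)%N.
Hypothesis hi : gft_map iota.
Local Notation C := R[i].

Lemma iotaD u v : iota (u + v) = iota u + iota v. Proof. by case: hi. Qed.
Lemma iotaZ a v : iota (a *: v) = a%:C *: iota v. Proof. by case: hi. Qed.
Lemma iotaH v : iota v \is hermsymmx. Proof. by case: hi. Qed.
Lemma iotaN v : iota (- v) = - iota v.
Proof. by rewrite -scaleN1r iotaZ rmorphN1 scaleN1r. Qed.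
Lemma iotaB u v : iota (u - v) = iota u - iota v.
Proof. by rewrite iotaD iotaN. Qed.
Lemma iota0 : iota 0 = 0.
Proof. by rewrite -(subrr (0 : V)) iotaB subrr. Qed.

Definition ell (A : 'M[C]_n) : V -> R^o := fun w => complex.Re (\tr (A *m iota w)).
Lemma ell_lin A : linear (ell A).
Proof.
move=> a u v; rewrite /ell iotaD iotaZ mulmxDr -scalemxAr mxtraceD mxtraceZ ReD ReM.
by [].
Qed.
Lemma iota_starE rho v : iota_star iota rho v = ell rho v.
Proof. exact: (linfunE' (ell_lin rho)). Qed.
Lemma ellD A B w : ell (A + B) w = ell A w + ell B w.
Proof. by rewrite /ell mulmxDl mxtraceD ReD. Qed.
Lemma ellZ c A w : ell (c%:C *: A) w = c * ell A w.
Proof. by rewrite /ell -scalemxAl mxtraceZ ReM. Qed.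
Lemma ell0 w : ell 0 w = 0.
Proof. by rewrite /ell mul0mx mxtrace0. Qed.
Lemma ell_sum (s : seq (R * 'M[C]_n)) w :
  ell (\sum_(p <- s) (p.1)%:C *: p.2) w = \sum_(p <- s) p.1 * ell p.2 w.
Proof.
elim: s => [|p s IH]; first by rewrite !big_nil ell0.
by rewrite !big_cons ellD ellZ IH.
Qed.
Lemma ell_scalar A w c : iota w = c%:C%:M -> ell A w = c * complex.Re (\tr A).
Proof. by move=> h; rewrite /ell h mul_mx_scalar mxtraceZ ReM. Qed.

Local Notation S := (rep_densities iota).

Lemma sum_nthR (t : seq R) : \sum_(i < size t) t`_i = \sum_(x <- t) x.
Proof.
elim: t => [|a t IH]; first by rewrite big_ord0 big_nil.
by rewrite big_ord_recl big_cons /=; congr (_ + _); rewrite -IH. 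
Qed.

Lemma sum_nthZ (s : seq (R * 'M[C]_n)) (g : R * 'M[C]_n -> 'Hom(V, R^o)) :
  \sum_(i < size (map g s)) (map fst s)`_i *: (map g s)`_i = \sum_(p <- s) p.1 *: g p.
Proof.
elim: s => [|a s IH]; first by rewrite big_ord0 big_nil.
rewrite big_ord_recl big_cons /=; congr (_ + _); rewrite -IH.
by [].
Qed.

Lemma aff_of_herm B : B \is hermsymmx -> \tr B = 1 -> in_aff_hull S (iota_star iota B).
Proof.
move=> hB htr; case: (Sp_herm hB) => s [hs hBs].
exists (map (fun p => iota_star iota p.2) s), (map fst s); split.
- by rewrite !size_map.
- move=> p /mapP [q qs ->]; exists q.2; split => //; exact: hs.
- rewrite sum_nthR big_map; apply: (@complexI R); rewrite rmorph_sum rmorph1 -htr hBs.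
  rewrite raddf_sum !big_seq; apply: eq_bigr => p ps /=.
  by case: (hs p ps) => _ _ h1; rewrite mxtraceZ h1 mulr1.
- rewrite sum_nthZ; apply/lfunP => v.
  rewrite iota_starE hBs ell_sum sum_lfunE; apply: eq_bigr => p _.
  by rewrite scale_lfunE iota_starE.
Qed.

Definition tau v : R := complex.Re (\tr (iota v)) / n%:R.
Definition iota' v := iota v - (tau v)%:C%:M.

Lemma n_neq0 : (n%:R : R) != 0.
Proof. by rewrite pnatr_eq0 -lt0n. Qed.

Lemma tr_iota' v : \tr (iota' v) = 0.
Proof.
rewrite raddfB /= (@mxtrace_scalar _ n) {1}(herm_tr_real (iotaH v)) /tau -rmorphMn -rmorphB /=.
by rewrite -mulr_natr divfK ?n_neq0 // subrr.
Qed.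

Lemma herm_iota' v : iota' v \is hermsymmx.
Proof.
apply/hermP => i j; move/hermP: (iotaH v) => H.
by rewrite !mxE rmorphB rmorphMn /= conjR -H eq_sym.
Qed.

Lemma iota'0 v : iota' v = 0 <-> exists c : R, iota v = c%:C%:M.
Proof.
split; first by move/subr0_eq => h; exists (tau v).
move=> [c hc]; rewrite /iota' /tau hc (@mxtrace_scalar _ n) -rmorphMn /=.
by rewrite -mulr_natr mulfK ?n_neq0 // subrr.
Qed.

Lemma tau_lin a u v : tau (a *: u + v) = a * tau u + tau v.
Proof.
rewrite /tau iotaD iotaZ mxtraceD mxtraceZ ReD ReM; by rewrite mulrDl mulrA.
Qed.

Lemma iota'_lin a u v : iota' (a *: u + v) = a%:C *: iota' u + iota' v.
Proof.
rewrite /iota' iotaD iotaZ tau_lin; apply/matrixP => i j; rewrite !mxE.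
rewrite rmorphD rmorphM /=; ring.
Qed.

Lemma rho0_herm (i0 : 'I_n) : (delta_mx i0 i0 : 'M[C]_n) \is hermsymmx.
Proof. by apply/hermP => a b; rewrite !mxE rmorph_nat andbC. Qed.

Lemma rho0_tr (i0 : 'I_n) : \tr (delta_mx i0 i0 : 'M[C]_n) = 1.
Proof.
rewrite /mxtrace (bigD1 i0) //= mxE !eqxx big1 ?addr0 // => i /negbTE hi0.
by rewrite mxE hi0.
Qed.

Variable K : {vspace V}.
Hypothesis hK : forall v : V, v \in K <-> exists c : R, iota v = (real_complex R c)%:M.

Definition Gfun v : 'Hom(V, R^o) := linfun (ell (iota' v)).
Lemma Glin : linear Gfun.
Proof.
move=> a u v; apply/lfunP => w.
by rewrite add_lfunE scale_lfunE !(linfunE' (ell_lin _)) iota'_lin ellD ellZ.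
Qed.
Definition G := linfun Gfun.
Lemma GvE v w : G v w = ell (iota' v) w.
Proof. by rewrite (linfunE' Glin) /Gfun (linfunE' (ell_lin _)). Qed.

Lemma kerG : lker G = K.
Proof.
apply/vspaceP => v; rewrite memv_ker; apply/idP/idP.
  move/eqP => h; have := congr1 (fun f : 'Hom(V, R^o) => f v) h.
  rewrite GvE zero_lfunE /ell.
  have E : iota v = iota' v + (tau v)%:C%:M by rewrite /iota' subrK.
  rewrite E mulmxDr mul_mx_scalar mxtraceD mxtraceZ tr_iota' mulr0 addr0 => h0.
  have := herm_sq0 (herm_iota' v) h0; move/iota'0 => hc; exact/hK.
move/hK/iota'0 => h0; apply/eqP/lfunP => w.
by rewrite GvE zero_lfunE h0 ell0.
Qed.

Lemma dim_limgG : \dim (limg G) = (\dim {:V} - \dim K)%N.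
Proof. by have := limg_ker_dim G fullv; rewrite capfv kerG => <-; rewrite addKn. Qed.

Lemma limgG_Ann : limg G = Ann K.
Proof.
apply/eqP; rewrite eqEdim dim_limgG dimAnn leqnn andbT.
apply/subvP => f /memv_imgP [v _ ->]; apply/memAnn => w /hK [c hc].
by rewrite GvE (ell_scalar _ hc) tr_iota' mulr0.
Qed.

Let i0 : 'I_n := Ordinal hn.
Let rho0 : 'M[C]_n := delta_mx i0 i0.

Lemma hull_add f : f \in Ann K -> in_aff_hull S (iota_star iota rho0 + f).
Proof.
rewrite -limgG_Ann => /memv_imgP [v _ ->].
have -> : iota_star iota rho0 + G v = iota_star iota (rho0 + iota' v).
  by apply/lfunP => w; rewrite add_lfunE !iota_starE GvE ellD.
apply: aff_of_herm; last by rewrite mxtraceD rho0_tr tr_iota' addr0.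
apply/hermP => a b; move/hermP: (rho0_herm i0) => H1; move/hermP: (herm_iota' v) => H2.
by rewrite [LHS]mxE [in RHS]mxE /rho0 (H1 a b) (H2 a b) rmorphD.
Qed.

Lemma hull_rho0 : in_aff_hull S (iota_star iota rho0).
Proof. by have := hull_add (mem0v _); rewrite addr0. Qed.

Lemma hull_K a v c : in_aff_hull S a -> iota v = c%:C%:M -> a v = c.
Proof.
case=> ps [cs [hsz hps hsum ->]] hc; rewrite sum_lfunE.
have E : forall i : 'I_(size ps), (cs`_i *: ps`_i) v = cs`_i * c.
  move=> i; rewrite scale_lfunE.
  have [rho [[_ _ htr] ->]] := hps _ (mem_nth 0 (ltn_ord i)).
  by rewrite iota_starE (ell_scalar _ hc) htr mulr1.
rewrite (eq_bigr _ (fun i _ => E i)) -mulr_suml -hsz hsum mul1r //.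
Qed.

Lemma memD f : f \in Ann K <-> exists a b, [/\ in_aff_hull S a, in_aff_hull S b & f = a - b].
Proof.
split.
  move=> hf; exists (iota_star iota rho0 + f), (iota_star iota rho0); split.
  - exact: hull_add.
  - exact: hull_rho0.
  - by rewrite addrC addKr.
move=> [a [b [ha hb ->]]]; apply/memAnn => w /hK [c hc].
by rewrite add_lfunE opp_lfunE (hull_K ha hc) (hull_K hb hc) subrr.
Qed.

Lemma hull_all : K = 0%VS -> forall f, in_aff_hull S f.
Proof.
move=> K0 f.
have : f - iota_star iota rho0 \in Ann K.
  by apply/memAnn => v; rewrite K0 memv0 => /eqP ->; rewrite linear0.
by move/hull_add; rewrite addrC subrK.
Qed.

Lemma K0_iff : K = 0%VS <-> (injective iota /\ ~ (exists v : V, iota v = 1%:M)).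
Proof.
split.
  move=> K0; split.
    move=> u v h; apply/eqP; rewrite -subr_eq0 -memv0 -K0; apply/hK.
    by exists 0; rewrite iotaB h subrr; apply/matrixP => a b; rewrite !mxE rmorph0 mul0rn.
  move=> [v hv].
  have : v \in K by apply/hK; exists 1; rewrite rmorph1.
  rewrite K0 memv0 => /eqP v0; move: hv; rewrite v0 iota0 => /matrixP /(_ i0 i0).
  by rewrite !mxE eqxx /= => /eqP; rewrite eq_sym oner_eq0.
move=> [inj no1]; apply/eqP; rewrite -subv0; apply/subvP => v /hK [c hc].
rewrite memv0; have [c0|cn0] := eqVneq c 0.
  by apply/eqP; apply: inj; rewrite hc iota0 c0; apply/matrixP => a b; rewrite !mxE rmorph0 mul0rn.
exfalso; apply: no1; exists (c^-1 *: v); rewrite iotaZ hc scale_scalar_mx -rmorphM mulVf //.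
Qed.
End Main.

Lemma dimHom (R : realType) (V : vectType R) : \dim {:'Hom(V, R^o)} = \dim {:V}.
Proof. rewrite !dimvf. change (dim V * 1 = dim V)%N. by rewrite muln1. Qed.

Theorem proposition2p12 (R : realType) (V : vectType R) (n : nat)
    (iota : V -> 'M[R[i]]_n) (W : 'M[R[i]]_n) :
  (0 < n)%N -> gft_map iota -> W \is hermsymmx ->
  forall K : {vspace V},
    (forall v : V, v \in K <-> exists c : R, iota v = (real_complex R c)%:M) ->
  [/\ aff_dim (rep_densities iota) (\dim {:V} - \dim K)%N,
      aff_dim (rep_densities iota) (\dim {:'Hom(V, R^o)})
        <-> (injective iota /\ ~ (exists v : V, iota v = 1%:M))
    & (forall f : 'Hom(V, R^o), in_aff_hull (rep_densities iota) f)
        <-> K = 0%VS].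
Proof.
move=> hn hi _ K hK.
have mD := @memD _ _ _ _ hn hi K hK.
have uniq : forall d, aff_dim (rep_densities iota) d -> d = (\dim {:V} - \dim K)%N.
  move=> d [U [hU <-]].
  have -> : U = Ann K.
    apply/vspaceP => x; apply/idP/idP => h.
      by apply/mD; apply/hU.
    by apply/hU; apply/mD.
  exact: dimAnn.
have dK : (\dim K <= \dim {:V})%N by apply: dimvS; apply: subvf.
have K0d : K = 0%VS <-> \dim K = 0%N.
  split; first by move=> ->; rewrite dimv0.
  by move/eqP; rewrite dimv_eq0 => /eqP.
have hK0 := @K0_iff _ _ _ _ hn hi K hK.
have P1 : aff_dim (rep_densities iota) (\dim {:V} - \dim K)%N.
  exists (Ann K); split; last exact: dimAnn.
  exact: mD.
split.
- exact: P1.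
- split.
    move/uniq; rewrite dimHom => h; apply/hK0/K0d.
    move: h dK; set a := \dim {:V}; set b := \dim K => h hb.
    apply/eqP; rewrite -(eqn_add2l a) addn0; apply/eqP.
    by rewrite {1}h subnK.
  move/hK0/K0d => h0; move: P1; by rewrite h0 subn0 dimHom.
- split.
    move=> hall; apply/K0d.
    have hA : Ann K = fullv.
      apply/vspaceP => f; rewrite memvf; apply/mD.
      exists f, 0; split => //; last by rewrite subr0.
    have := dimAnn K; rewrite hA dimHom => h.
    move: h dK; set a := \dim {:V}; set b := \dim K => h hb.
    apply/eqP; rewrite -(eqn_add2l a) addn0; apply/eqP.
    by rewrite {1}h subnK.
  exact: (@hull_all _ _ _ _ hn hi K hK).
Qed.
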